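(* For any $0\le p\le n$, any $\eta,\mu\in\mathcal P(S_p)$ and any $f_n\in\mathrm{Osc}_1(S_n)$, there exist functions $\mathcal U_{p,n,\eta}(f_n),\mathcal V_{p,n,\eta}(f_n),\mathcal W_{p,n,\eta}(f_n)\in\mathrm{Osc}_1(S_p)$ whose values depend only on $(p,n,\eta)$ and $f_n$ (not on $\mu$), such that $$[\Phi_{p,n}(\mu)-\Phi_{p,n}(\eta)](f_n)=2q_{p,n}\beta(\mathcal P_{p,n})\,[\mu-\eta]\big(\mathcal U_{p,n,\eta}(f_n)\big)+\mathcal R_{p,n}(\mu,\eta)(f_n),$$ where $$|\mathcal R_{p,n}(\mu,\eta)(f_n)|\le 4q_{p,n}^3\beta(\mathcal P_{p,n})\,\big|[\mu-\eta](\mathcal V_{p,n,\eta}(f_n))\big|\,\big|[\mu-\eta](\mathcal W_{p,n,\eta}(f_n))\big|.$$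
   Context: Let $(S_n)_{n\ge0}$ be measurable spaces, $\mathcal M_n$ ($n\ge1$) Markov kernels from $S_{n-1}$ to $S_n$, and $\mathcal G_n:S_n\to(0,1)$ ($n\ge0$) measurable with $q_n:=\sup_{x,y}\mathcal G_n(x)/\mathcal G_n(y)<\infty$. Let $\mathcal Q_{p+1}(x,dy):=\mathcal G_p(x)\mathcal M_{p+1}(x,dy)$, $\mathcal Q_{p,n}:=\mathcal Q_{p+1}\mathcal Q_{p+2}\cdots\mathcal Q_n$ ($\mathcal Q_{n,n}=\mathrm{Id}$), $\mathcal P_{p,n}(f):=\mathcal Q_{p,n}(f)/\mathcal Q_{p,n}(1)$, and for $\mu\in\mathcal P(S_p)$, $\Phi_{p,n}(\mu)(f):=\mu(\mathcal Q_{p,n}f)/\mu(\mathcal Q_{p,n}1)$. Set $q_{p,n}:=\sup_{x,y\in S_p}\mathcal Q_{p,n}(1)(x)/\mathcal Q_{p,n}(1)(y)$ and $\beta(\mathcal P_{p,n}):=\sup_{f\in\mathrm{Osc}_1(S_n)}\mathrm{osc}(\mathcal P_{p,n}f)$, where $\mathrm{osc}(f)=\sup_{x,y}|f(x)-f(y)|$ and $\mathrm{Osc}_1(E)$ is the set of measurable functions on $E$ with oscillation at most $1$. *)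

(* Defs.v *)
From HB Require Import structures.
From mathcomp Require Import all_boot all_order all_algebra.
From mathcomp Require Import all_classical all_reals all_analysis.
Set Implicit Arguments. Unset Strict Implicit. Unset Printing Implicit Defensive.
Import Order.TTheory GRing.Theory Num.Theory.
Local Open Scope classical_set_scope.
Local Open Scope ring_scope.

Definition Osc1 (d : measure_display) (T : measurableType d) (R : realType)
  (f : T -> R) : Prop :=
  measurable_fun setT f /\ (forall x y, `|f x - f y| <= 1).

(* osc(f) = sup_{x,y} |f x - f y| (used only on bounded functions) *)
Definition osc (T : Type) (R : realType) (f : T -> R) : R :=
  sup [set r | exists x y, r = `|f x - f y|].

Definition mapp (d : measure_display) (T : measurableType d) (R : realType)
  (mu : {measure set T -> \bar R}) (f : T -> R) : R :=
  fine (\int[mu]_x (f x)%:E).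

(* Q_{m+1} f (x) = G_m(x) \int M_{m+1}(x,dy) f(y).
   Convention: M m is the Markov kernel from S m to S (m+1), i.e. M_{m+1}. *)
Definition Q1 (R : realType) (d : nat -> measure_display)
  (S : forall n, measurableType (d n)) (G : forall n, S n -> R)
  (M : forall n, R.-pker (S n) ~> (S n.+1)) (m : nat)
  (f : S m.+1 -> R) : S m -> R :=
  fun x => G m x * fine (\int[M m x]_y (f y)%:E).

Arguments Q1 {R d S} G M m f _.

(* Q_{p,k+p} = Q_{p+1} ... Q_{k+p}  (Q_{p,p} = Id) *)
Fixpoint Qpn (R : realType) (d : nat -> measure_display)
  (S : forall n, measurableType (d n)) (G : forall n, S n -> R)
  (M : forall n, R.-pker (S n) ~> (S n.+1)) (p k : nat) {struct k}
  : (S (k + p)%N -> R) -> S p -> R :=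
  match k return (S (k + p)%N -> R) -> S p -> R with
  | 0 => fun f => f
  | k'.+1 => fun f => @Qpn R d S G M p k' (@Q1 R d S G M (k' + p)%N f)
  end.
Arguments Qpn {R d S} G M p k f _.

Definition Ppn (R : realType) (d : nat -> measure_display)
  (S : forall n, measurableType (d n)) (G : forall n, S n -> R)
  (M : forall n, R.-pker (S n) ~> (S n.+1)) (p k : nat)
  (f : S (k + p)%N -> R) : S p -> R :=
  fun x => Qpn G M p k f x / Qpn G M p k (fun _ => 1) x.

Arguments Ppn {R d S} G M p k f _.

Definition Phi (R : realType) (d : nat -> measure_display)
  (S : forall n, measurableType (d n)) (G : forall n, S n -> R)
  (M : forall n, R.-pker (S n) ~> (S n.+1)) (p k : nat)
  (mu : probability (S p) R) (f : S (k + p)%N -> R) : R :=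
  mapp mu (Qpn G M p k f) / mapp mu (Qpn G M p k (fun _ => 1)).

Arguments Phi {R d S} G M p k mu f.

Definition qpn (R : realType) (d : nat -> measure_display)
  (S : forall n, measurableType (d n)) (G : forall n, S n -> R)
  (M : forall n, R.-pker (S n) ~> (S n.+1)) (p k : nat) : R :=
  sup [set r | exists x y,
        r = Qpn G M p k (fun _ => 1) x / Qpn G M p k (fun _ => 1) y].

Definition betaP (R : realType) (d : nat -> measure_display)
  (S : forall n, measurableType (d n)) (G : forall n, S n -> R)
  (M : forall n, R.-pker (S n) ~> (S n.+1)) (p k : nat) : R :=
  sup [set r | exists f : S (k + p)%N -> R, Osc1 f /\ r = osc (Ppn G M p k f)].
Arguments qpn {R d S} G M p k.
Arguments betaP {R d S} G M p k.

(* Main.v *)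
Require Import Defs.
From HB Require Import structures.
From mathcomp Require Import all_boot all_order all_algebra.
From mathcomp Require Import all_classical all_reals all_analysis.
From mathcomp Require Import ring lra measurable_realfun.
Import Order.TTheory GRing.Theory Num.Theory.
Local Open Scope classical_set_scope.
Local Open Scope ring_scope.
Set Implicit Arguments. Unset Strict Implicit. Unset Printing Implicit Defensive.

Definition bm (d : measure_display) (T : measurableType d) (R : realType)
  (f : T -> R) : Prop :=
  measurable_fun setT f /\ exists B : R, forall x, `|f x| <= B.

Lemma bm_bounded (d : measure_display) (T : measurableType d) (R : realType)
  (f : T -> R) : bm f -> [bounded f x | x in [set: T]].
Proof.
move=> [_ [B hB]]; rewrite /bounded_near.
near=> M.
rewrite /globally /= => x _.
apply: le_trans (hB x) _; near: M; apply: nbhs_pinfty_ge; exact: num_real.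
Unshelve. all: end_near. Qed.

Lemma bm_int (d : measure_display) (T : measurableType d) (R : realType)
  (mu : {measure set T -> \bar R}) (h1 : mu setT = 1%E) (f : T -> R) :
  bm f -> mu.-integrable setT (EFin \o f).
Proof.
move=> hf; apply: measurable_bounded_integrable => //.
- by rewrite h1 ltry.
- by case: hf.
- exact: bm_bounded.
Qed.

Lemma mappD (d : measure_display) (T : measurableType d) (R : realType)
  (mu : {measure set T -> \bar R}) (h1 : mu setT = 1%E) (f g : T -> R) :
  bm f -> bm g -> mapp mu (fun x => f x + g x) = mapp mu f + mapp mu g.
Proof.
move=> hf hg; rewrite /mapp.
exact: (RintegralD measurableT (bm_int h1 hf) (bm_int h1 hg)).
Qed.

Lemma mappZ (d : measure_display) (T : measurableType d) (R : realType)
  (mu : {measure set T -> \bar R}) (h1 : mu setT = 1%E) (f : T -> R) (c : R) :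
  bm f -> mapp mu (fun x => c * f x) = c * mapp mu f.
Proof.
move=> hf; rewrite /mapp.
by apply: RintegralZl => //; exact: bm_int.
Qed.

Lemma mapp_cst (d : measure_display) (T : measurableType d) (R : realType)
  (mu : {measure set T -> \bar R}) (h1 : mu setT = 1%E) (c : R) :
  mapp mu (fun _ => c) = c.
Proof.
rewrite /mapp.
have := Rintegral_cst mu (@measurableT _ T) c.
rewrite /Rintegral => ->; by rewrite h1 /= mulr1.
Qed.

Lemma mapp_le (d : measure_display) (T : measurableType d) (R : realType)
  (mu : {measure set T -> \bar R}) (h1 : mu setT = 1%E) (f g : T -> R) :
  bm f -> bm g -> (forall x, f x <= g x) -> mapp mu f <= mapp mu g.
Proof.
move=> hf hg fg; rewrite /mapp.
exact: (le_Rintegral measurableT (bm_int h1 hf) (bm_int h1 hg)).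
Qed.

Lemma bm_cst (d : measure_display) (T : measurableType d) (R : realType)
  (c : R) : bm (fun _ : T => c).
Proof. by split; [exact: measurable_cst | exists `|c|]. Qed.

Lemma bm_add (d : measure_display) (T : measurableType d) (R : realType)
  (f g : T -> R) : bm f -> bm g -> bm (fun x => f x + g x).
Proof.
move=> [mf [B hB]] [mg [C hC]]; split.
  exact: measurable_realfun.measurable_funD.
exists (B + C) => x; apply: le_trans (ler_normD _ _) _; exact: lerD.
Qed.

Lemma bm_scale (d : measure_display) (T : measurableType d) (R : realType)
  (f : T -> R) (c : R) : bm f -> bm (fun x => c * f x).
Proof.
move=> [mf [B hB]]; split.
  exact: measurable_realfun.measurable_funM.
exists (`|c| * B) => x; rewrite normrM; apply: ler_wpM2l => //.
Qed.

Lemma mk_meas (dx dy : measure_display) (X : measurableType dx)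
  (Y : measurableType dy) (R : realType) (M : R.-pker X ~> Y) (f : Y -> R) :
  bm f -> measurable_fun setT (fun x => mapp (M x) f).
Proof.
move=> hf; have [mf [B hB]] := hf.
pose g := fun y => f y + B.
have e : (fun x => mapp (M x) f) = (fun x => mapp (M x) g + (- B)).
  apply/funext => x.
  rewrite (mappD (prob_kernel x) hf (bm_cst _ B)) (mapp_cst (prob_kernel x)).
  by rewrite addrK.
rewrite e; apply: measurable_realfun.measurable_funD; last exact: measurable_cst.
have H := @measurable_fun_integral_kernel _ _ _ _ _ M _ (EFin \o g) _ _.
have {}H := H (measurable_kernel M).
have h0 : forall y, (0%:E <= (EFin \o g) y)%E.
  move=> y /=; rewrite lee_fin /g.
  move: (hB y); rewrite ler_norml => /andP[h1 _]; lra.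
have {}H := H h0.
have hm : measurable_fun setT g by exact: measurable_realfun.measurable_funD.
have hm' : measurable_fun setT (EFin \o g) by exact/measurable_EFinP.
have {}H := H hm'.
exact: (measurableT_comp (fine_measurable measurableT) H).
Qed.

Lemma mapp_bnd (dx : measure_display) (X : measurableType dx)
  (R : realType) (mu : {measure set X -> \bar R}) (h1 : mu setT = 1%E) (f : X -> R) (B : R) :
  bm f -> (forall y, `|f y| <= B) -> `|mapp mu f| <= B.
Proof.
move=> hf hB; rewrite ler_norml; apply/andP; split.
  rewrite -[X in X <= _](mapp_cst h1).
  apply: mapp_le => //; first exact: bm_cst.
  by move=> y; move: (hB y); rewrite ler_norml => /andP[].
rewrite -[X in _ <= X](mapp_cst h1 B).
apply: mapp_le => //; first exact: bm_cst.
by move=> y; move: (hB y); rewrite ler_norml => /andP[].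
Qed.

Lemma osc_range (T : Type) (R : realType) (f : T -> R) :
  (forall x y, `|f x - f y| <= 1) -> exists a, forall y, a <= f y <= a + 1.
Proof.
move=> hf; have [[y0 _]|ne] := pselect (exists y : T, True); last first.
  by exists 0 => y; exfalso; apply: ne; exists y.
have hub : has_ubound (range f).
  exists (f y0 + 1) => _ [z _ <-].
  by move: (hf z y0); rewrite ler_norml => /andP[_ h]; lra.
exists (sup (range f) - 1) => y; apply/andP; split.
  have : sup (range f) <= f y + 1.
    apply: ge_sup; first by exists (f y0); exists y0.
    by move=> _ [z _ <-]; move: (hf z y); rewrite ler_norml => /andP[_ h]; lra.
  lra.
have : f y <= sup (range f) by apply: ub_le_sup => //; exists y.
lra.
Qed.

Lemma Osc1_bm (dd : measure_display) (T : measurableType dd) (R : realType)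
  (f : T -> R) : Osc1 f -> bm f.
Proof.
move=> [mf hf]; split => //.
have [a ha] := osc_range hf.
exists (`|a| + 1) => y; have /andP[h1 h2] := ha y.
rewrite ler_norml; apply/andP; split.
  have := ler_norm (- a); rewrite normrN; lra.
have := ler_norm a; lra.
Qed.

Section Qsec.
Local Unset Implicit Arguments.
Variables (R : realType) (d : nat -> measure_display)
  (S : forall n, measurableType (d n))
  (M : forall n, R.-pker (S n) ~> (S n.+1))
  (G : forall n, S n -> R)
  (G_meas : forall n, measurable_fun setT (G n))
  (G_range : forall n x, 0 < G n x < 1)
  (G_ratio : forall n, exists c : R, forall x y, G n x / G n y <= c).



Lemma Q1_bm m (f : S m.+1 -> R) : bm f -> bm (Q1 G M m f).
Proof.
move=> hf; have [mf [B hB]] := hf; split.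
  apply: measurable_funM => //; exact: (mk_meas (M m) hf).
exists B => x; rewrite /Q1 normrM.
have hG : `|G m x| <= 1.
  by have /andP[h0 h1] := G_range m x; rewrite ger0_norm ?ltW.
have hm : `|fine (\int[M m x]_y (f y)%:E)| <= B.
  exact: (mapp_bnd (prob_kernel x) hf hB).
have hB0 : 0 <= B by apply: le_trans hm.
by rewrite -[B]mul1r; apply: ler_pM.
Qed.

Lemma Q1_lin m (f h : S m.+1 -> R) (c : R) : bm f -> bm h ->
  forall x, Q1 G M m (fun y => f y + c * h y) x = Q1 G M m f x + c * Q1 G M m h x.
Proof.
move=> hf hh x; rewrite /Q1.
have -> : fine (\int[M m x]_y ((f y + c * h y)%:E)) =
  mapp (M m x) (fun y => f y + c * h y) by [].
rewrite (mappD (prob_kernel x) hf (bm_scale c hh)) (mappZ (prob_kernel x) c hh).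
rewrite /mapp; ring.
Qed.

Lemma Q1_mono m (f h : S m.+1 -> R) : bm f -> bm h -> (forall y, f y <= h y) ->
  forall x, Q1 G M m f x <= Q1 G M m h x.
Proof.
move=> hf hh fh x; rewrite /Q1; apply: ler_wpM2l.
  by have /andP[h0 _] := G_range m x; rewrite ltW.
exact: (mapp_le (prob_kernel x) hf hh fh).
Qed.

Lemma Qpn_bm p k (f : S (k + p)%N -> R) : bm f -> bm (Qpn G M p k f).
Proof.
elim: k f => [|k IH] f hf //=.
apply: IH; exact: Q1_bm.
Qed.

Lemma Qpn_lin p k (f h : S (k + p)%N -> R) (c : R) : bm f -> bm h ->
  forall x, Qpn G M p k (fun y => f y + c * h y) x =
            Qpn G M p k f x + c * Qpn G M p k h x.
Proof.
elim: k f h => [|k IH] f h hf hh x //=.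
have -> : Q1 G M (k + p)%N (fun y => f y + c * h y) =
  (fun y => Q1 G M (k + p)%N f y + c * Q1 G M (k + p)%N h y).
  apply/funext => y; exact: Q1_lin.
by apply: IH; exact: Q1_bm.
Qed.

Lemma Qpn_mono p k (f h : S (k + p)%N -> R) : bm f -> bm h ->
  (forall y, f y <= h y) -> forall x, Qpn G M p k f x <= Qpn G M p k h x.
Proof.
elim: k f h => [|k IH] f h hf hh fh x //=.
apply: IH; try exact: Q1_bm.
exact: Q1_mono.
Qed.

Lemma Qpn_cst p k (c : R) x :
  Qpn G M p k (fun _ => c) x = c * Qpn G M p k (fun _ => 1) x.
Proof.
have h0 : forall x, Qpn G M p k (fun _ => 0) x = 0.
  move=> y.
  have := Qpn_lin p k _ _ 1 (bm_cst _ 0) (bm_cst _ 0) y.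
  have -> : (fun _ : S (k + p)%N => (0 : R) + 1 * 0) = (fun _ => 0).
    by apply/funext => z; rewrite mulr0 addr0.
  move=> e; have : Qpn G M p k (fun _ => 0) y * 1 = 0 by lra.
  by rewrite mulr1.
have := Qpn_lin p k _ _ c (bm_cst _ 0) (bm_cst _ 1) x.
have -> : (fun _ : S (k + p)%N => (0 : R) + c * 1) = (fun _ => c).
  by apply/funext => z; rewrite mulr1 add0r.
by rewrite h0 add0r.
Qed.

Lemma G_lb m : exists e, 0 < e /\ forall x, e <= G m x.
Proof.
have [[y0 _]|ne] := pselect (exists y : S m, True); last first.
  by exists 1; split => // y; exfalso; apply: ne; exists y.
have [C hC] := G_ratio m.
have Gp : forall x, 0 < G m x by move=> x; have /andP[] := G_range m x.
have C0 : 0 < C by apply: lt_le_trans (hC y0 y0); apply: divr_gt0.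
exists (G m y0 / C); split; first exact: divr_gt0.
move=> x; rewrite ler_pdivrMr //.
by have := hC y0 x; rewrite ler_pdivrMr // mulrC.
Qed.

Lemma Qpn_pos p k (f : S (k + p)%N -> R) : bm f ->
  (exists c, 0 < c /\ forall y, c <= f y) ->
  exists e, 0 < e /\ forall x, e <= Qpn G M p k f x.
Proof.
elim: k f => [|k IH] f hf [c [c0 hc]] //=.
  by exists c.
apply: IH; first exact: Q1_bm.
have [e [e0 he]] := G_lb (k + p)%N.
exists (e * c); split; first exact: mulr_gt0.
move=> x; rewrite /Q1; apply: ler_pM; [exact: ltW|exact: ltW|exact: he|].
have -> : fine (\int[M (k + p)%N x]_y (f y)%:E) = mapp (M (k + p)%N x) f by [].
rewrite -[X in X <= _](mapp_cst (@prob_kernel _ _ _ _ _ (M (k + p)%N) x) c).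
apply: mapp_le; [exact: prob_kernel|exact: bm_cst|exact: hf|exact: hc].
Qed.

Lemma g_pos p k : exists e, 0 < e /\ forall x, e <= Qpn G M p k (fun _ => 1) x.
Proof. apply: Qpn_pos; [exact: bm_cst|by exists 1]. Qed.

Lemma Ppn_osc p k (f : S (k + p)%N -> R) : Osc1 f ->
  forall x y, `|Ppn G M p k f x - Ppn G M p k f y| <= 1.
Proof.
move=> hf; have [a ha] := osc_range (proj2 hf).
have bf := Osc1_bm hf.
have [e [e0 he]] := g_pos p k.
have hb : forall x, a <= Ppn G M p k f x <= a + 1.
  move=> x; have gx : 0 < Qpn G M p k (fun _ => 1) x by apply: lt_le_trans (he x).
  rewrite /Ppn ler_pdivlMr // ler_pdivrMr //.
  rewrite -!Qpn_cst; apply/andP; split.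
    apply: Qpn_mono => //; first exact: bm_cst.
    by move=> y; have /andP[] := ha y.
  apply: Qpn_mono => //; first exact: bm_cst.
  by move=> y; have /andP[] := ha y.
move=> x y; have /andP[h1 h2] := hb x; have /andP[h3 h4] := hb y.
rewrite ler_norml; apply/andP; split; lra.
Qed.

End Qsec.

Theorem lemma4p3 (R : realType) (d : nat -> measure_display)
  (S : forall n, measurableType (d n))
  (M : forall n, R.-pker (S n) ~> (S n.+1))
  (G : forall n, S n -> R)
  (G_meas : forall n, measurable_fun setT (G n))
  (G_range : forall n x, 0 < G n x < 1)
  (G_ratio : forall n, exists c : R, forall x y, G n x / G n y <= c)
  (p k : nat) (eta : probability (S p) R)
  (f : S (k + p)%N -> R) (hf : Osc1 f) :
  exists U V W : S p -> R, [/\ Osc1 U, Osc1 V, Osc1 W &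
    forall mu : probability (S p) R,
      let q := qpn G M p k in
      let b := betaP G M p k in
      let Rem := Phi G M p k mu f - Phi G M p k eta f
                 - 2 * q * b * (mapp mu U - mapp eta U) in
      `|Rem| <= 4 * q ^+ 3 * b * `|mapp mu V - mapp eta V|
                                * `|mapp mu W - mapp eta W|].
Proof.
have [x0 _] : exists x : S p, True.
  apply: contrapT => ne.
  have e : [set: S p] = set0.
    by apply/seteqP; split => // x _; apply: ne; exists x.
  have := probability_setT eta; rewrite e measure0 => /esym [] /eqP.
  by rewrite oner_eq0.
pose g := Qpn G M p k (fun _ => 1).
pose h := Qpn G M p k f.
have bf := Osc1_bm hf.
have Qbm := Qpn_bm R d S M G G_meas G_range p k.
have Qmono := Qpn_mono R d S M G G_meas G_range p k.
have Qcst := Qpn_cst R d S M G G_meas G_range p k.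
have Posc := Ppn_osc R d S M G G_meas G_range G_ratio p k.
have bg : bm g by apply: Qbm; exact: bm_cst.
have bh : bm h by apply: Qbm.
have [e [e0 he]] := g_pos R d S M G G_meas G_range G_ratio p k.
have gpos : forall x, 0 < g x by move=> x; apply: lt_le_trans (he x).
pose q := qpn G M p k.
pose b := betaP G M p k.
have hq : forall x y, g x / g y <= q.
  move=> x y; apply: ub_le_sup; last by exists x, y.
  have [_ [B hB]] := bg.
  exists (B / e) => _ [x' [y' ->]].
  rewrite ler_pdivrMr ?gpos //.
  have B0 : 0 <= B by apply: le_trans (hB x').
  apply: le_trans (_ : B <= _); first by apply: le_trans (hB x'); exact: ler_norm.
  apply: le_trans (_ : B / e * e <= _); first by rewrite divfK ?gt_eqF.
  by apply: ler_wpM2l (he y'); apply: divr_ge0 B0 (ltW e0).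
have q1 : 1 <= q by have := hq x0 x0; rewrite divff ?gt_eqF.
have q0 : 0 < q by apply: lt_le_trans q1.
have hgq : forall x y, g x <= q * g y.
  by move=> x y; rewrite -ler_pdivrMr //; exact: hq.
pose P := Ppn G M p k f.
have hb : forall x y, `|P x - P y| <= b.
  have oscb : forall f' : S (k + p)%N -> R, Osc1 f' -> osc (Ppn G M p k f') <= 1.
    move=> f' hf'; apply: ge_sup.
      by exists `|Ppn G M p k f' x0 - Ppn G M p k f' x0|; exists x0, x0.
    move=> _ [x [y ->]]; exact: Posc.
  have hosc : forall x y, `|P x - P y| <= osc P.
    move=> x y; apply: ub_le_sup; last by exists x, y.
    by exists 1 => _ [x' [y' ->]]; exact: Posc.
  have ob : osc P <= b.
    apply: ub_le_sup; last by exists f.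
    by exists 1 => _ [f' [hf' ->]]; exact: oscb.
  by move=> x y; apply: le_trans (hosc x y) ob.
have b0 : 0 <= b by have := hb x0 x0; rewrite subrr normr0.
have hmg : forall mu : probability (S p) R, e <= mapp mu g.
  move=> mu; rewrite -(mapp_cst (probability_setT mu) e).
  apply: mapp_le; [exact: probability_setT|exact: bm_cst|exact: bg|exact: he].
have hgmu : forall (mu : probability (S p) R) x, g x <= q * mapp mu g.
  move=> mu x; rewrite -(mappZ (probability_setT mu) q bg).
  rewrite -(mapp_cst (probability_setT mu) (g x)).
  apply: mapp_le; [exact: probability_setT|exact: bm_cst|exact: bm_scale|].
  by move=> y; exact: hgq.
pose eg := mapp eta g.
have eg0 : 0 < eg by apply: lt_le_trans (hmg eta).
pose c := mapp eta h / eg.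
have hPg : forall y, P y * g y = h y.
  by move=> y; rewrite /P /Ppn divfK // gt_eqF.
have hPc : forall x, `|P x - c| <= b.
  move=> x.
  have hy : forall y, (P x - b) * g y <= h y <= (P x + b) * g y.
    move=> y; rewrite -hPg; move: (hb x y); rewrite ler_norml => /andP[h1 h2].
    by apply/andP; split; (apply: ler_wpM2r; [exact: ltW (gpos y)|lra]).
  have l1 : (P x - b) * eg <= mapp eta h.
    rewrite -(mappZ (probability_setT eta) _ bg).
    apply: mapp_le; [exact: probability_setT|exact: bm_scale|exact: bh|].
    by move=> y; have /andP[] := hy y.
  have l2 : mapp eta h <= (P x + b) * eg.
    rewrite -(mappZ (probability_setT eta) _ bg).
    apply: mapp_le; [exact: probability_setT|exact: bh|exact: bm_scale|].
    by move=> y; have /andP[] := hy y.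
  have l3 : P x - b <= c by rewrite /c ler_pdivlMr.
  have l4 : c <= P x + b by rewrite /c ler_pdivrMr.
  rewrite ler_norml; apply/andP; split; lra.
pose phi := fun x => eg^-1 * (h x + (- c) * g x).
have bphi : bm phi by apply: bm_scale; apply: bm_add bh _; exact: bm_scale.
have hphi : forall x, `|phi x| <= q * b.
  move=> x.
  have -> : phi x = (g x / eg) * (P x - c).
    by rewrite /phi -hPg; field; rewrite gt_eqF.
  rewrite normrM ger0_norm; last by apply: divr_ge0; [exact: ltW|exact: ltW].
  apply: ler_pM => //; first by apply: divr_ge0; [exact: ltW|exact: ltW].
  by rewrite ler_pdivrMr //; exact: hgmu.
pose U := fun x => (2 * q * b)^-1 * phi x.
pose V := fun x => (q * eg)^-1 * g x.
have bU : bm U by exact: bm_scale.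
have bV : bm V by exact: bm_scale.
have hU : forall x, 2 * q * b * U x = phi x.
  move=> x; rewrite /U; have [b00|bn0] := eqVneq b 0.
    have : `|phi x| <= 0 by move: (hphi x); rewrite b00 mulr0.
    by rewrite normr_le0 => /eqP ->; rewrite !mulr0.
  by rewrite mulrA mulfV ?mul1r // !mulf_neq0 // gt_eqF.
have hV : forall x, q * eg * V x = g x.
  by move=> x; rewrite /V mulrA mulfV ?mul1r // mulf_neq0 // gt_eqF.
have oU : Osc1 U.
  split; first by case: bU.
  move=> x y; have [b00|bn0] := eqVneq b 0.
    have e0' : forall z, U z = 0.
      move=> z; have : `|phi z| <= 0 by move: (hphi z); rewrite b00 mulr0.
      by rewrite normr_le0 /U => /eqP ->; rewrite mulr0.
    by rewrite !e0' subrr normr0.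
  have bp : 0 < b by rewrite lt_neqAle eq_sym bn0 b0.
  have k0 : 0 < 2 * q * b by rewrite !mulr_gt0.
  rewrite /U -mulrBr normrM ger0_norm; last by rewrite invr_ge0 ltW.
  rewrite mulrC ler_pdivrMr // mul1r.
  move: (hphi x) (hphi y); rewrite !ler_norml => /andP[h1 h2] /andP[h3 h4].
  apply/andP; split; lra.
have oV : Osc1 V.
  split; first by case: bV.
  have hv : forall x, 0 <= V x <= 1.
    move=> x; apply/andP; split.
      by rewrite /V mulr_ge0 // ?invr_ge0 ?mulr_ge0 ?ltW.
    rewrite /V mulrC ler_pdivrMr ?mulr_gt0 // mul1r; exact: hgmu.
  move=> x y; have /andP[h1 h2] := hv x; have /andP[h3 h4] := hv y.
  rewrite ler_norml; apply/andP; split; lra.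
exists U, V, U; split => // mu.
cbv zeta; rewrite -/q -/b.
have h1 := probability_setT mu.
have e1 := probability_setT eta.
have -> : Phi G M p k mu f = mapp mu h / mapp mu g by [].
have -> : Phi G M p k eta f = c by [].
pose mg := mapp mu g.
have mg0 : 0 < mg by apply: lt_le_trans (hmg mu).
have egq : eg <= q * mg.
  rewrite /eg -(mapp_cst e1 (q * mg)).
  apply: mapp_le; [exact: e1|exact: bg|exact: bm_cst|].
  move=> y; exact: hgmu.
have mphi : forall nu : probability (S p) R,
    mapp nu phi = eg^-1 * (mapp nu h - c * mapp nu g).
  move=> nu; have n1 := probability_setT nu.
  rewrite /phi (mappZ n1 _ (bm_add bh (bm_scale _ bg))).
  by rewrite (mappD n1 bh (bm_scale _ bg)) (mappZ n1 _ bg) mulNr.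
have ephi : mapp eta phi = 0.
  by rewrite mphi -/eg /c divfK ?subrr ?mulr0 // gt_eqF.
have mU : forall nu : probability (S p) R, mapp nu phi = 2 * q * b * mapp nu U.
  move=> nu; rewrite -(mappZ (probability_setT nu) _ bU).
  by congr mapp; apply/funext => x; rewrite hU.
have mV : forall nu : probability (S p) R, mapp nu g = q * eg * mapp nu V.
  move=> nu; rewrite -(mappZ (probability_setT nu) _ bV).
  by congr mapp; apply/funext => x; rewrite hV.
set X := mapp mu U - mapp eta U.
set Y := mapp mu V - mapp eta V.
have eX : 2 * q * b * X = eg^-1 * (mapp mu h - c * mg).
  by rewrite /X mulrBr -!mU ephi subr0 mphi.
have ev := mV eta; rewrite -/eg in ev.
have eY0 : mg - eg = q * eg * Y by rewrite /Y /mg (mV mu) mulrBr -ev.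
have eY : q * Y = (mg - eg) / eg.
  by rewrite eY0; field; rewrite gt_eqF.
have claim : mapp mu h / mapp mu g - c - 2 * q * b * X =
    - (2 * q * b * X) * (q * Y) * (eg / mg).
  rewrite eX eY -/mg; field; rewrite !gt_eqF //.
have t1 : eg / mg <= q by rewrite ler_pdivrMr.
have t0 : 0 <= eg / mg by rewrite divr_ge0 ?ltW.
have k0 : 0 <= 2 * q * b by rewrite !mulr_ge0 // ltW.
rewrite claim normrM (ger0_norm t0) normrM normrN.
rewrite (normrM (2 * q * b)) (normrM q) (ger0_norm (ltW q0)) (ger0_norm k0).
set t := eg / mg.
have K0 : 0 <= 2 * q * q * b * `|X| * `|Y|.
  by rewrite !mulr_ge0 // ltW.
have := ler_wpM2l K0 t1.
have Kq : 0 <= 2 * q * q * b * `|X| * `|Y| * q.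
  by rewrite mulr_ge0 // ltW.
move=> H.
have -> : 2 * q * b * `|X| * (q * `|Y|) * t = 2 * q * q * b * `|X| * `|Y| * t by ring.
have -> : 4 * q ^+ 3 * b * `|Y| * `|X| = 2 * (2 * q * q * b * `|X| * `|Y| * q) by ring.
apply: le_trans H _; rewrite -[X in X <= _]mul1r.
by apply: (ler_wpM2r Kq); rewrite ler1n.
Qed.
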